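(* Let $\alpha$ be a reduced operation sequence of size $n$ producing the permutation $\pi$. Then the set of elements produced by the peaks of $\alpha$ equals the set of right-to-left maxima of $\pi$, i.e. the set of entries $\pi_j$ such that $\pi_j>\pi_k$ for all $k>j$.
   Context: Operation sequences: $\sigma[a]$ ($a\ge1$) denotes pushing the top $a$ elements of the input stack, as a block with relative order unchanged, onto the top of a working stack; $\tau[b]$ ($b\ge1$) denotes moving the top $b$ elements of the working stack, as a block with relative order unchanged, onto the top of an output stack; $\sigma=\sigma[1]$, $\tau=\tau[1]$. A well-formed operation sequence is a word $\alpha=\alpha_1\cdots\alpha_m$ in these symbols such that in every prefix the total push size is at least the total pop size, with equality for the whole word; its size $n$ is the total push size. Acting on an input stack containing $1,2,\dots,n$ with $1$ on top, it produces the permutation $\pi=\pi_1\cdots\pi_n$ obtained by reading the final output stack from top to bottom. $\alpha$ is reduced if every consecutive pair $\alpha_i\alpha_{i+1}$ with $\alpha_i$ a push and $\alpha_{i+1}$ a pop equals $\sigma[1]\tau[1]$. Such a pair in a reduced sequence is a peak, and the element pushed by $\alpha_i$ (equivalently popped by $\alpha_{i+1}$) is the element produced by that peak. *)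

(* Defs.v *)
From mathcomp Require Import all_boot.
Set Implicit Arguments. Unset Strict Implicit. Unset Printing Implicit Defensive.

(* An operation: Push a = sigma[a], Pop b = tau[b]. *)
Inductive op := Push of nat | Pop of nat.

Definition push_size (o : op) : nat := if o is Push a then a else 0.
Definition pop_size (o : op) : nat := if o is Pop b then b else 0.
Definition is_push (o : op) : bool := if o is Push _ then true else false.
Definition is_pop (o : op) : bool := if o is Pop _ then true else false.

Definition total_push (w : seq op) : nat := sumn (map push_size w).
Definition total_pop (w : seq op) : nat := sumn (map pop_size w).

Definition well_formed (w : seq op) : Prop :=
  (forall i, i < size w -> 0 < push_size (nth (Pop 0) w i) + pop_size (nth (Pop 0) w i)) /\
  (forall i, total_pop (take i w) <= total_push (take i w)) /\
  total_pop w = total_push w.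

Definition op_size (w : seq op) : nat := total_push w.

(* State: (input stack, working stack, output stack), heads are tops. *)
Definition state := (seq nat * seq nat * seq nat)%type.

Definition step (s : state) (o : op) : state :=
  let: (inp, wk, out) := s in
  match o with
  | Push a => (drop a inp, take a inp ++ wk, out)
  | Pop b => (inp, drop b wk, take b wk ++ out)
  end.

Definition init_state (n : nat) : state := (iota 1 n, [::], [::]).

Definition exec (n : nat) (w : seq op) : state := foldl step (init_state n) w.

Definition produced_perm (n : nat) (w : seq op) : seq nat := (exec n w).2.

Definition reduced (w : seq op) : Prop :=
  forall i, i.+1 < size w ->
    is_push (nth (Pop 0) w i) -> is_pop (nth (Pop 0) w i.+1) ->
    nth (Pop 0) w i = Push 1 /\ nth (Pop 0) w i.+1 = Pop 1.

(* Peak at position i (0-based): alpha_i alpha_{i+1} = sigma[1] tau[1]. *)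
Definition peak (w : seq op) (i : nat) : Prop :=
  i.+1 < size w /\ nth (Pop 0) w i = Push 1 /\ nth (Pop 0) w i.+1 = Pop 1.

Definition pushed_elt (n : nat) (w : seq op) (i : nat) : nat :=
  head 0 (exec n (take i w)).1.1.

Definition rl_max (pi : seq nat) (x : nat) : Prop :=
  exists j, j < size pi /\ nth 0 pi j = x /\
    forall k, j < k < size pi -> nth 0 pi k < x.

(* Main.v *)
Require Import Defs.
From mathcomp Require Import all_boot zify.

Lemma exec_S n w i : i < size w ->
  exec n (take i.+1 w) = step (exec n (take i w)) (nth (Pop 0) w i).
Proof. move=> H; by rewrite /exec (take_nth (Pop 0) H) -cats1 foldl_cat. Qed.

Lemma tp_S w i : i < size w ->
  total_push (take i.+1 w) = total_push (take i w) + push_size (nth (Pop 0) w i).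
Proof. move=> H; by rewrite /total_push (take_nth (Pop 0) H) map_rcons sumn_rcons. Qed.

Lemma tp_le w i : total_push (take i w) <= total_push w.
Proof.
rewrite -{2}(cat_take_drop i w) /total_push map_cat sumn_cat; lia.
Qed.

Lemma inv12 n w i : op_size w = n -> i <= size w ->
  let s := exec n (take i w) in let c := total_push (take i w) in
  s.1.1 = iota c.+1 (n - c) /\ all (fun y => y <= c) (s.1.2 ++ s.2).
Proof.
move=> Hn; elim: i => [|i IH] Hi /=.
  by rewrite take0 /= subn0.
have Hi' : i < size w by [].
move: (IH (ltnW Hi)) => /=.
have Hc := tp_le w i.+1; rewrite /op_size in Hn.
rewrite exec_S // tp_S //; rewrite tp_S // in Hc.
case: (exec n (take i w)) => [[inp wk] out] /= [-> Hall].
case: (nth (Pop 0) w i) Hc => [a|b] /= Hc.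
- split; first by rewrite drop_iota; congr iota; lia.
  rewrite take_iota; apply/allP => y; move/allP: Hall => Hall.
  rewrite -catA mem_cat mem_iota => /orP[/andP[H1 H2]|H]; first lia.
  by have := Hall y H; lia.
- rewrite addn0; split => //.
  apply/allP => y; move/allP: Hall => Hall.
  rewrite mem_cat mem_cat => /orP[H|/orP[H|H]]; apply: Hall; rewrite mem_cat.
  + by rewrite (mem_drop H).
  + by rewrite (mem_take H).
  + by rewrite H orbT.
Qed.


Lemma rl_cat_r B O x : rl_max O x -> rl_max (B ++ O) x.
Proof.
case=> j [Hj [Hx Hk]]; exists (size B + j); rewrite size_cat nth_cat.
split; first lia.
rewrite ifN; last lia.
rewrite addKn; split => // k /andP[Hk1 Hk2].
rewrite nth_cat ifN; last lia.
apply: Hk; apply/andP; split; lia.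
Qed.

Lemma rl_cat_inv B O x : rl_max (B ++ O) x ->
  rl_max O x \/ (x \in B /\ forall y, y \in O -> y < x).
Proof.
case=> j [Hj [Hx Hk]]; rewrite size_cat in Hj Hk.
case: (ltnP j (size B)) => HjB.
- right; rewrite nth_cat HjB in Hx; split; first by rewrite -Hx mem_nth.
  move=> y Hy; have := Hk (size B + index y O).
  rewrite nth_cat ifN; last lia.
  rewrite addKn nth_index //; apply.
  have Hi : index y O < size O by rewrite index_mem.
  apply/andP; split; lia.
- left; exists (j - size B); rewrite nth_cat ltnNge HjB /= in Hx.
  split; first lia. split => // k /andP[Hk1 Hk2].
  have := Hk (size B + k); rewrite nth_cat ifN; last lia.
  rewrite addKn; apply; apply/andP; split; lia.
Qed.

Lemma rl_cons z O : (forall y, y \in O -> y < z) -> rl_max (z :: O) z.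
Proof.
move=> H; exists 0; split => //; split => // k /andP[Hk Hk'].
case: k Hk Hk' => // k _ /= Hk; apply: H; exact: mem_nth.
Qed.

Definition Pk n w i x := exists p, p.+2 <= i /\ peak w p /\ pushed_elt n w p = x.

Lemma inv34 n w i : op_size w = n -> reduced w -> i <= size w ->
 (forall x, rl_max (exec n (take i w)).2 x <-> Pk n w i x) /\
 ((i = 0 \/ is_pop (nth (Pop 0) w i.-1)) ->
    forall y, y \in (exec n (take i w)).1.2 -> exists2 z, z \in (exec n (take i w)).2 & y < z).
Proof.
move=> Hn Hred; elim: i => [|i IH] Hi.
  rewrite take0 /=; split => // x; split.
  - by case=> j [].
  - by case=> p [].
have Hi' : i < size w by [].
have [IH3 IH4] := IH (ltnW Hi).
rewrite exec_S //.
case E: (exec n (take i w)) IH3 IH4 => [[inp wk] out] IH3 IH4.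
rewrite /= in IH3 IH4.
case Eo: (nth (Pop 0) w i) => [a|b] /=.
- split => [x|]; last by case. apply: iff_trans (IH3 x) _; split.
  + by case=> p [? ?]; exists p; split => //; lia.
  + case=> p [Hp [Hpk Hpx]]; exists p; split => //.
    case: (ltngtP p.+2 i.+1) Hp => // Hpe _.
    case: Hpk => _ [_]; have -> : p.+1 = i by lia.
    by rewrite Eo.
-
  have [H0|[j [Ej Hj]]] : (i = 0 \/ is_pop (nth (Pop 0) w i.-1)) \/
      exists j, i = j.+1 /\ nth (Pop 0) w j = Push 1 /\ b = 1.
  + case: i Hi Hi' IH IH3 IH4 E Eo => [|j] Hi Hi' IH IH3 IH4 E Eo; first by left; left.
    case Ej: (nth (Pop 0) w j) => [a|b'] /=; last by left; right.
    right; exists j; split => //.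
    have [] := Hred j Hi'; rewrite ?Ej ?Eo //.
    by move=> -> [].
  + have H4 := IH4 H0.
    split.
    * move=> x; split.
      - move/rl_cat_inv => [Hx|[Hx Hall]].
        + case/IH3: Hx => p [Hp Hpk]; exists p; split => //; lia.
        + have [z Hz Hxz] := H4 x (mem_take Hx).
          by have := Hall z Hz; lia.
      - case=> p [Hp [Hpk Hpx]].
        case: (ltngtP p.+2 i.+1) Hp => // Hpe _.
        + apply: rl_cat_r; apply/IH3; exists p; split => //; lia.
        + case: Hpk => _ [Hp1 _]; case: H0 => [H0|H0]; first lia.
          by move: H0; have -> : i.-1 = p by [lia]; rewrite Hp1.
    * move=> _ y /mem_drop Hy; have [z Hz Hyz] := H4 y Hy.
      by exists z => //; rewrite mem_cat Hz orbT.
  + case: Hj => Hj Hb; subst i b.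
    have [H1 H2] := @inv12 n w j Hn (ltnW (ltnW Hi')).
    have Hc := tp_le w j.+2; rewrite /op_size in Hn.
    rewrite (@tp_S w j.+1 Hi') (@tp_S w j (ltnW Hi')) Hj Eo /= in Hc.
    move: E; rewrite (@exec_S n w j (ltnW Hi')) Hj.
    case E': (exec n (take j w)) H1 H2 => [[inp' wk'] out'] /= H1 H2 [_ Ewk Eout].
    subst wk out; rewrite Hn in Hc.
    set c := total_push (take j w) in H1 H2 Hc *.
    have Enc : n - c = (n - c.+1).+1 by lia.
    rewrite H1 Enc /=.
    have Hpe : pushed_elt n w j = c.+1.
      by rewrite /pushed_elt E' /= H1 Enc.
    have Hlt : forall y, y \in wk' ++ out' -> y < c.+1.
      by move=> y Hy; move/allP: H2 => /(_ y Hy); lia.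
    split.
    * move=> x; split.
      - rewrite /= take0 /=.
        have Hpk : Pk n w j.+2 c.+1.
          exists j; split => //; split => //; split => //; lia.
        case Ex: (x == c.+1); first by move/eqP: Ex => ->.
        move/(rl_cat_inv [:: c.+1]) => [Hx|[Hx _]].
        + case/IH3: Hx => p [Hp Hpk']; exists p; split => //; lia.
        + by move: Hx; rewrite inE Ex.
      - case=> p [Hp [Hpk Hpx]].
        rewrite /= take0 /=.
        case: (ltngtP p.+2 j.+2) Hp => // Hpe' _.
        + apply: (rl_cat_r [:: c.+1]); apply/IH3; exists p; split => //; lia.
        + have Ep : p = j by lia.
          subst p.
          rewrite -Hpx Hpe; apply: rl_cons => y Hy; apply: Hlt.
          by rewrite mem_cat Hy orbT.
    * move=> _ y; rewrite /= drop0 take0 => Hy.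
      exists c.+1; first by rewrite mem_head.
      by apply: Hlt; rewrite mem_cat Hy.
Qed.

Theorem mainTheorem8 (n : nat) (alpha : seq op) (pi : seq nat) :
  well_formed alpha -> op_size alpha = n -> reduced alpha ->
  produced_perm n alpha = pi ->
  forall x : nat,
    (exists i, peak alpha i /\ pushed_elt n alpha i = x) <-> rl_max pi x.
Proof.
move=> _ Hn Hred <- x.
have [H3 _] := @inv34 n alpha (size alpha) Hn Hred (leqnn _).
rewrite take_size in H3; rewrite /produced_perm H3; split.
- case=> i [Hp Hx]; exists i; split => //; case: Hp; lia.
- by case=> p [_ H]; exists p.
Qed.
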